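(* Let $n,q$ be positive integers and let $f_{n,q}:\mathbb{C}^3\to\mathbb{C}$, $f_{n,q}(x,y,z)=x-3x^{2n+1}y^{2q}+2x^{3n+1}y^{3q}+yz$. Then the Łojasiewicz number at infinity of $f_{n,q}$ is $L_\infty(f_{n,q})=-\frac{n}{q}$.
   Context: For a polynomial $g:\mathbb{C}^m\to\mathbb{C}$, let $\operatorname{grad} g(x)=\left(\overline{\frac{\partial g}{\partial x_1}(x)},\dots,\overline{\frac{\partial g}{\partial x_m}(x)}\right)$. If $g$ has non-isolated singularities (critical points), set $L_\infty(g)=-\infty$. If $g$ has only isolated singularities (in particular, if it has no critical points), the Łojasiewicz number at infinity $L_\infty(g)$ is the supremum of the set of $\nu\in\mathbb{R}$ for which there exist $A>0$, $B>0$ such that for all $x\in\mathbb{C}^m$ with $\|x\|\ge B$ one has $A\|x\|^\nu\le\|\operatorname{grad} g(x)\|$. Equivalently, $L_\infty(g)=\lim_{r\to\infty}\frac{\log\varphi(r)}{\log r}$ where $\varphi(r)=\inf_{\|x\|=r}\|\operatorname{grad} g(x)\|$. *)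

(* Defs.v *)
From HB Require Import structures.
From mathcomp Require Import all_boot all_order all_algebra.
From mathcomp Require Import mpoly.
From mathcomp Require Import boolp classical_sets reals ereal exp.
From mathcomp Require complex.
Import complex.ComplexField.
Import Order.TTheory GRing.Theory Num.Theory.
Local Open Scope ring_scope.
Local Open Scope classical_set_scope.

Set Implicit Arguments.
Unset Strict Implicit.
Unset Printing Implicit Defensive.

Notation Cx R := (complex.complex R).

Definition cconj (R : realType) (z : Cx R) : Cx R :=
  complex.Complex (complex.Re z) (- complex.Im z).

Definition vnorm (R : realType) (m : nat) (x : 'I_m -> Cx R) : R :=
  Num.sqrt (\sum_(i < m) (complex.Re (x i) ^+ 2 + complex.Im (x i) ^+ 2)).

(* Partial derivative dg/dx_i evaluated at x (formal derivative of the
   polynomial g, which coincides with the complex partial derivative). *)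
Definition pderiv_at (R : realType) (m : nat) (g : mpoly.mpoly m (Cx R))
  (i : 'I_m) (x : 'I_m -> Cx R) : Cx R :=
  mpoly.meval x (mpoly.mderiv i g).

Definition grad (R : realType) (m : nat) (g : mpoly.mpoly m (Cx R))
  (x : 'I_m -> Cx R) : 'I_m -> Cx R :=
  fun i => cconj (pderiv_at g i x).

Definition critical (R : realType) (m : nat) (g : mpoly.mpoly m (Cx R))
  (x : 'I_m -> Cx R) : Prop :=
  forall i : 'I_m, pderiv_at g i x = 0.

Definition isolated_singularities (R : realType) (m : nat)
  (g : mpoly.mpoly m (Cx R)) : Prop :=
  forall x, critical g x ->
    exists2 e : R, 0 < e &
      forall y, critical g y -> vnorm (fun i => y i - x i) < e -> y = x.

Definition loj_exponents (R : realType) (m : nat) (g : mpoly.mpoly m (Cx R))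
  : set R :=
  [set nu : R | exists A B : R, 0 < A /\ 0 < B /\
     forall x : 'I_m -> Cx R, B <= vnorm x ->
       A * (vnorm x) `^ nu <= vnorm (grad g x)].

Definition L_infty (R : realType) (m : nat) (g : mpoly.mpoly m (Cx R))
  : \bar R :=
  if `[< isolated_singularities g >]
  then ereal_sup [set (nu%:E)%E | nu in loj_exponents g]
  else (-oo)%E.

Definition var3 (R : realType) (k : nat) (hk : (k < 3)%N)
  : mpoly.mpoly 3 (Cx R) :=
  mpoly.mpolyX (Cx R) (mpoly.mnm1 (Ordinal hk)).

Definition f_nq (R : realType) (n q : nat) : mpoly.mpoly 3 (Cx R) :=
  let X := @var3 R 0 isT in
  let Y := @var3 R 1 isT in
  let Z := @var3 R 2 isT in
  X - 3%:R * (X ^+ (2 * n + 1) * Y ^+ (2 * q))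
    + 2%:R * (X ^+ (3 * n + 1) * Y ^+ (3 * q)) + Y * Z.

(* Main.v *)
Require Import Defs.
From HB Require Import structures.
From mathcomp Require Import all_boot all_order all_algebra.
From mathcomp Require Import mpoly.
From mathcomp Require Import boolp classical_sets reals ereal exp.
From mathcomp Require complex.
Import complex.ComplexField.
From mathcomp Require Import ring lra zify.
Import Order.TTheory GRing.Theory Num.Theory.
Local Open Scope ring_scope.
Section MP.
Variable (R : realType).
Local Notation C := (Cx R).

Lemma mev_dX (v : 'I_3 -> C) (i j : 'I_3) :
  (mpolyX C U_(j) )^`M(i).@[v] = (j == i)%:R.
Proof.
rewrite mderivX mevalZ mnm1E; case: eqP => [->|_]; last by rewrite mul0r.
have -> : (U_(i) - U_(i))%MM = 0%MM by apply/mnmP => k; rewrite mnmBE mnm0E subnn.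
by rewrite mpolyX0 meval1 mulr1.
Qed.

Lemma mev_dXn (v : 'I_3 -> C) (i : 'I_3) p k :
  ((p ^+ k)^`M(i)).@[v] = k%:R * p.@[v] ^+ k.-1 * (p^`M(i)).@[v].
Proof.
elim: k => [|k IH]; first by rewrite expr0 -mpolyC1 mderivC meval0 !mul0r.
rewrite exprS mderivM mevalD !mevalM IH rmorphXn /=.
case: k IH => [|k] IH; first by rewrite /= !(mul0r, mulr0, addr0, expr0, mulr1, mul1r).
rewrite /= exprS; rewrite -[(k.+2)%:R]natr1 -[(k.+1)%:R]natr1; ring.
Qed.

Lemma mderiv_natM (i : 'I_3) k (p : {mpoly C[3]}) : (k%:R * p)^`M(i) = k%:R * p^`M(i).
Proof. by rewrite -mpolyC_nat mderiv_mulC. Qed.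

Lemma evM (a b : mpoly.mpoly 3 (Cx R)) v : meval v (a * b) = meval v a * meval v b.
Proof. exact: mevalM. Qed.
Lemma evD (a b : mpoly.mpoly 3 (Cx R)) v : meval v (a + b) = meval v a + meval v b.
Proof. exact: mevalD. Qed.
Lemma evN (a : mpoly.mpoly 3 (Cx R)) v : meval v (- a) = - meval v a.
Proof. exact: mevalN. Qed.
Lemma evNat k v : meval v (k%:R : mpoly.mpoly 3 (Cx R)) = k%:R.
Proof. exact: rmorph_nat. Qed.
Lemma mev_Xn (v : 'I_3 -> C) (j : 'I_3) k : ((mpolyX C U_(j)) ^+ k).@[v] = v j ^+ k.
Proof. by rewrite rmorphXn /= mevalXU. Qed.

Lemma pd_gen n q v i : pderiv_at (f_nq R n q) i v =
  (Ordinal (isT : (0 < 3)%N) == i)%:R -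
  3 *
  ((2 * n + 1)%:R * v (Ordinal (isT : (0 < 3)%N)) ^+ (2 * n + 1).-1 *
   (Ordinal (isT : (0 < 3)%N) == i)%:R *
   v (Ordinal (isT : (1 < 3)%N)) ^+ (2 * q) +
   v (Ordinal (isT : (0 < 3)%N)) ^+ (2 * n + 1) *
   ((2 * q)%:R * v (Ordinal (isT : (1 < 3)%N)) ^+ (2 * q).-1 *
    (Ordinal (isT : (1 < 3)%N) == i)%:R)) +
  2 *
  ((3 * n + 1)%:R * v (Ordinal (isT : (0 < 3)%N)) ^+ (3 * n + 1).-1 *
   (Ordinal (isT : (0 < 3)%N) == i)%:R *
   v (Ordinal (isT : (1 < 3)%N)) ^+ (3 * q) +
   v (Ordinal (isT : (0 < 3)%N)) ^+ (3 * n + 1) *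
   ((3 * q)%:R * v (Ordinal (isT : (1 < 3)%N)) ^+ (3 * q).-1 *
    (Ordinal (isT : (1 < 3)%N) == i)%:R)) +
  ((Ordinal (isT : (1 < 3)%N) == i)%:R * v (Ordinal (isT : (2 < 3)%N)) +
   v (Ordinal (isT : (1 < 3)%N)) * (Ordinal (isT : (2 < 3)%N) == i)%:R).
Proof.
rewrite /pderiv_at /f_nq /var3.
have h3 := evNat 3 v; have d3 := mderiv_natM i 3.
have h2 := evNat 2 v; have d2 := mderiv_natM i 2.
have ex := mevalXU v (Ordinal (isT : (0 < 3)%N)).
have ey := mevalXU v (Ordinal (isT : (1 < 3)%N)).
have ez := mevalXU v (Ordinal (isT : (2 < 3)%N)).
have dx := mev_dX v i (Ordinal (isT : (0 < 3)%N)).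
have dy := mev_dX v i (Ordinal (isT : (1 < 3)%N)).
have dz := mev_dX v i (Ordinal (isT : (2 < 3)%N)).
have xn := mev_Xn v (Ordinal (isT : (0 < 3)%N)).
have yn := mev_Xn v (Ordinal (isT : (1 < 3)%N)).
have dxn := fun k => mev_dXn v i (mpolyX C U_(Ordinal (isT : (0 < 3)%N))) k.
have dyn := fun k => mev_dXn v i (mpolyX C U_(Ordinal (isT : (1 < 3)%N))) k.
move: (mpolyX C U_(Ordinal (isT : (0 < 3)%N))) (mpolyX C U_(Ordinal (isT : (1 < 3)%N))) (mpolyX C U_(Ordinal (isT : (2 < 3)%N))) ex ey ez dx dy dz xn yn dxn dyn => x y z ex ey ez dx dy dz xn yn dxn dyn.
move: (3%:R : {mpoly C[3]}) (2%:R : {mpoly C[3]}) h3 d3 h2 d2 => c3 c2 h3 d3 h2 d2.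
have eD := fun a b => evD a b v; have eN := fun a => evN a v; have eM := fun a b => evM a b v.
have dD : forall a b : {mpoly C[3]}, (a+b)^`M(i) = a^`M(i) + b^`M(i) := fun a b => mderivD i a b.
have dN : forall a : {mpoly C[3]}, (- a)^`M(i) = - a^`M(i) := fun a => mderivN i a.
have dM : forall a b : {mpoly C[3]}, (a*b)^`M(i) = a^`M(i) * b + a * b^`M(i) := fun a b => mderivM i a b.
move: (meval v) (mderiv i) eD eN eM dD dN dM ex ey ez dx dy dz xn yn dxn dyn h3 d3 h2 d2 => e d eD eN eM dD dN dM ex ey ez dx dy dz xn yn dxn dyn h3 d3 h2 d2.
rewrite !dD !dN d3 d2 !dM.
rewrite !(eD, eN, eM).
rewrite !dxn !dyn !xn !yn ex ey ez dx dy dz h3 h2.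
done.
Qed.

Lemma pdX n q v : pderiv_at (f_nq R n q) (Ordinal (isT : (0 < 3)%N)) v =
  1 - 3 * ((2 * n + 1)%:R * v (Ordinal (isT : (0 < 3)%N)) ^+ (2 * n) * v (Ordinal (isT : (1 < 3)%N)) ^+ (2 * q))
  + 2 * ((3 * n + 1)%:R * v (Ordinal (isT : (0 < 3)%N)) ^+ (3 * n) * v (Ordinal (isT : (1 < 3)%N)) ^+ (3 * q)).
Proof.
rewrite pd_gen !eqxx.
have -> : (Ordinal (isT : (1 < 3)%N) == Ordinal (isT : (0 < 3)%N)) = false by [].
have -> : (Ordinal (isT : (2 < 3)%N) == Ordinal (isT : (0 < 3)%N)) = false by [].
rewrite !addn1 /=.
rewrite /=.
move: (v _) (v _) (v _) => a b c.
ring.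
Qed.

Lemma pdY n q v : pderiv_at (f_nq R n q) (Ordinal (isT : (1 < 3)%N)) v =
  - 3 * (v (Ordinal (isT : (0 < 3)%N)) ^+ (2 * n + 1) * ((2 * q)%:R * v (Ordinal (isT : (1 < 3)%N)) ^+ (2 * q).-1))
  + 2 * (v (Ordinal (isT : (0 < 3)%N)) ^+ (3 * n + 1) * ((3 * q)%:R * v (Ordinal (isT : (1 < 3)%N)) ^+ (3 * q).-1))
  + v (Ordinal (isT : (2 < 3)%N)).
Proof.
rewrite pd_gen !eqxx.
have -> : (Ordinal (isT : (0 < 3)%N) == Ordinal (isT : (1 < 3)%N)) = false by [].
have -> : (Ordinal (isT : (2 < 3)%N) == Ordinal (isT : (1 < 3)%N)) = false by [].
rewrite /=.
move: (v _) (v _) (v _) => a b c.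
move: ((2 * n + 1).-1) ((3 * n + 1).-1) ((2 * q).-1) ((3 * q).-1) => k1 k2 k3 k4.
ring.
Qed.

Lemma pdZ n q v : pderiv_at (f_nq R n q) (Ordinal (isT : (2 < 3)%N)) v = v (Ordinal (isT : (1 < 3)%N)).
Proof.
rewrite pd_gen !eqxx.
have -> : (Ordinal (isT : (0 < 3)%N) == Ordinal (isT : (2 < 3)%N)) = false by [].
have -> : (Ordinal (isT : (1 < 3)%N) == Ordinal (isT : (2 < 3)%N)) = false by [].
rewrite /=.
move: (v _) (v _) (v _) => a b c.
move: ((2 * n + 1).-1) ((3 * n + 1).-1) ((2 * q).-1) ((3 * q).-1) => k1 k2 k3 k4.
ring.
Qed.
End MP.
Section A.
Variable R : realType.
Local Notation C := (Cx R).
Local Notation nc := (@Normc.normc R).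

Lemma nc_ge0 (w : C) : 0 <= nc w.
Proof. by case: w => a b; rewrite /Normc.normc sqrtr_ge0. Qed.

Lemma ncX (w : C) k : nc (w ^+ k) = nc w ^+ k.
Proof.
elim: k => [|k IH]; first by rewrite !expr0 Normc.normc1.
by rewrite !exprS Normc.normcM IH.
Qed.

Lemma nc_natM (w : C) k : nc (k%:R * w) = k%:R * nc w.
Proof. by rewrite mulr_natl complex.normcMn mulr_natl. Qed.

Lemma nc_conj (w : C) : nc (cconj w) = nc w.
Proof. by case: w => a b; rewrite /Normc.normc /cconj /= sqrrN. Qed.

Lemma nc_real (c : R) : nc (complex.real_complex R c) = `|c|.
Proof. by rewrite /Normc.normc /= expr0n /= addr0 sqrtr_sqr. Qed.

Lemma sum3 (F : 'I_3 -> R) : \sum_(i < 3) F i =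
  F (Ordinal (isT : (0 < 3)%N)) + F (Ordinal (isT : (1 < 3)%N)) + F (Ordinal (isT : (2 < 3)%N)).
Proof.
rewrite !big_ord_recr big_ord0 /= add0r; congr (_ + _ + _); congr F; exact: val_inj.
Qed.

Lemma nc_tri (a b : C) : nc (a + b) <= nc a + nc b.
Proof. exact: complex.le_normcD. Qed.

Lemma vnorm_ge (x : 'I_3 -> C) j : nc (x j) <= vnorm x.
Proof.
rewrite /vnorm (bigD1 j) //=.
case: (x j) => a b; rewrite /Normc.normc /=.
apply: ler_wsqrtr; rewrite lerDl; apply: sumr_ge0 => i _.
by rewrite addr_ge0 // sqr_ge0.
Qed.

Lemma vnorm_ge0 (m : nat) (x : 'I_m -> C) : 0 <= vnorm x.
Proof. exact: sqrtr_ge0. Qed.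

Lemma grad_ge n q (x : 'I_3 -> C) j : nc (pderiv_at (f_nq R n q) j x) <= vnorm (grad (f_nq R n q) x).
Proof. by rewrite -nc_conj; apply: (vnorm_ge (grad (f_nq R n q) x) j). Qed.


Lemma cn_eq n : (3 * (2 * n + 1) + 2 * (3 * n + 1) = 12 * n + 5)%N.
Proof. lia. Qed.

Local Notation O0 := (Ordinal (isT : (0 < 3)%N)).
Local Notation O1 := (Ordinal (isT : (1 < 3)%N)).
Local Notation O2 := (Ordinal (isT : (2 < 3)%N)).

Lemma pdX_u n q (v : 'I_3 -> C) :
  pderiv_at (f_nq R n q) O0 v =
  1 - (3 * (2 * n + 1))%:R * (v O0 ^+ n * v O1 ^+ q) ^+ 2
    + (2 * (3 * n + 1))%:R * (v O0 ^+ n * v O1 ^+ q) ^+ 3.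
Proof.
rewrite pdX; move: (v O0) (v O1) => a b.
rewrite !exprMn -!exprM (mulnC n 2) (mulnC q 2) (mulnC n 3) (mulnC q 3).
ring.
Qed.

Lemma lower n q (hq : (0 < q)%N) (x : 'I_3 -> C) : 1 <= vnorm x ->
  (2 * (12 * n + 5))%:R^-1 * vnorm x `^ (- (n%:R / q%:R)) <= vnorm (grad (f_nq R n q) x).
Proof.
move=> r1.
set r := vnorm x; set K : R := (12 * n + 5)%:R; set d : R := (2 * (12 * n + 5))%:R^-1.
have r0 : 0 < r by apply: lt_le_trans r1.
have K1 : 1 <= K by rewrite /K ler1n addn_gt0 orbT.
have dK : d = (2 * K)^-1 by rewrite /d natrM.
have d0 : 0 < d by rewrite dK invr_gt0 mulr_gt0 // (lt_le_trans ltr01 K1).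
have d1 : d <= 2^-1.
  rewrite dK lef_pV2 ?posrE ?mulr_gt0 // ?(lt_le_trans ltr01 K1) //.
  by rewrite -[X in X <= _]mulr1 ler_wpM2l.
set s := r `^ (- (n%:R / q%:R)).
have s0 : 0 < s := powR_gt0 _ r0.
have s1 : s <= 1.
  rewrite /s powRN invf_le1 ?powR_gt0 //.
  have := @ge0_ler_powR R (n%:R / q%:R) (divr_ge0 (ler0n _ _) (ler0n _ _)) 1 r.
  by rewrite powR1; apply => //; rewrite nnegrE // ltW.
have sq : s ^+ q = (r ^+ n)^-1.
  rewrite /s -powR_mulrn ?powR_ge0 // -powRrM mulNr divfK ?pnatr_eq0 -?lt0n //.
  by rewrite powR_invn // ltW.
have ha := vnorm_ge x O0; have hb := vnorm_ge x O1.
have gz := grad_ge n q x O2; rewrite pdZ in gz.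
have gx := grad_ge n q x O0; rewrite pdX_u in gx.
have [hy|hy] := lerP (d * s) (nc (x O1)); first exact: le_trans gz.
set u := x O0 ^+ n * x O1 ^+ q.
have hu : nc u <= d.
  rewrite /u Normc.normcM !ncX.
  have h1 : nc (x O0) ^+ n <= r ^+ n by apply: lerXn2r; rewrite ?nnegrE ?nc_ge0 ?vnorm_ge0.
  have h2 : nc (x O1) ^+ q <= (d * s) ^+ q.
    by apply: lerXn2r; rewrite ?nnegrE ?nc_ge0 ?mulr_ge0 ?ltW.
  apply: le_trans (ler_pM _ _ h1 h2) _; rewrite ?exprn_ge0 ?nc_ge0 //.
  rewrite exprMn sq mulrCA mulrV ?unitfE ?expf_neq0 ?gt_eqF // mulr1.
  rewrite -(prednK hq) exprS ler_piMr ?(ltW d0) //.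
  apply: exprn_ile1; first exact: ltW.
  by apply: le_trans d1 _; rewrite invf_le1 // ler1n.
apply: le_trans gx. rewrite -/u.
apply: (le_trans (ler_piMr (ltW d0) s1)).
set c1 := (3 * (2 * n + 1))%N; set c2 := (2 * (3 * n + 1))%N.
have tri := nc_tri (1 - c1%:R * u ^+ 2 + c2%:R * u ^+ 3) (c1%:R * u ^+ 2 + - (c2%:R * u ^+ 3)).
have e1 : (1 - c1%:R * u ^+ 2 + c2%:R * u ^+ 3) + (c1%:R * u ^+ 2 + - (c2%:R * u ^+ 3)) = 1 :> C.
 ring.
rewrite e1 Normc.normc1 in tri.
have tri2 := nc_tri (c1%:R * u ^+ 2) (- (c2%:R * u ^+ 3)).
rewrite complex.normcN !nc_natM !ncX in tri2.
have cn : (c1 + c2 = 12 * n + 5)%N by rewrite /c1 /c2 cn_eq.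
have c12 : c1%:R + c2%:R = K :> R by rewrite -natrD cn.
have Kd : K * d = 2^-1 by rewrite dK invfM mulrA mulrC mulrA mulVf ?mul1r // gt_eqF // (lt_le_trans ltr01 K1).
set w := nc u in hu tri2.
have w0 : 0 <= w := nc_ge0 u.
have w2 : w ^+ 2 <= d ^+ 2 by apply: lerXn2r; rewrite ?nnegrE ?(ltW d0).
have w3 : w ^+ 3 <= d ^+ 2.
  rewrite exprS; apply: le_trans w2; apply: ler_piMl; first exact: exprn_ge0.
  by apply: le_trans hu _; apply: le_trans d1 _; rewrite invf_le1 // ler1n.
have c10 : 0 <= c1%:R :> R := ler0n _ _.
have c20 : 0 <= c2%:R :> R := ler0n _ _.
have h3 : c1%:R * w ^+ 2 + c2%:R * w ^+ 3 <= d / 2.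
  apply: le_trans (lerD (ler_wpM2l c10 w2) (ler_wpM2l c20 w3)) _.
  rewrite -mulrDl c12 expr2 mulrA Kd mulrC.
  done.
lra.
Qed.

Lemma powR_mono {a b p : R} : 0 <= p -> 0 <= a -> a <= b -> a `^ p <= b `^ p.
Proof.
move=> p0 a0 ab; apply: (ge0_ler_powR p0) => //; rewrite nnegrE //.
exact: le_trans ab.
Qed.

Lemma powR_anti {a b p : R} : 0 <= p -> 0 < a -> a <= b -> b `^ (- p) <= a `^ (- p).
Proof.
move=> p0 a0 ab; rewrite !powRN lef_pV2 ?posrE ?powR_gt0 //; last exact: lt_le_trans ab.
exact: powR_mono (ltW a0) ab.
Qed.

Definition rc (c : R) : C := complex.Complex c 0.

Lemma rcM a b : rc (a * b) = rc a * rc b.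
Proof. by rewrite /rc /=; congr complex.Complex; ring. Qed.

Lemma rcX a k : rc (a ^+ k) = rc a ^+ k.
Proof.
elim: k => [|k IH]; first by rewrite !expr0.
by rewrite !exprS rcM IH.
Qed.

Lemma c_eq n : (3 * (2 * n + 1) = 2 * (3 * n + 1) + 1)%N.
Proof. lia. Qed.

Lemma e_eq1 n : (3 * n + 1 = (2 * n + 1) + n)%N.
Proof. lia. Qed.

Lemma e_eq2 q : (0 < q)%N -> ((3 * q).-1 = (2 * q).-1 + q)%N.
Proof. lia. Qed.

Lemma upper n q (hq : (0 < q)%N) nu : loj_exponents (f_nq R n q) nu -> nu <= - (n%:R / q%:R).
Proof.
case=> A [B [A0 [B0 H]]].
rewrite leNgt; apply/negP => hnu.
set al : R := n%:R / q%:R in hnu *.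
have al0 : 0 <= al by rewrite divr_ge0 // ler0n.
set e := al + nu.
have e0 : 0 < e by rewrite /e; lra.
set k := (2^-1 : R) `^ (- al).
have k0 : 0 < k by rewrite powR_gt0.
set X := Num.max (Num.max 1 B) ((2 * k / A) `^ (e^-1)).
have X1 : 1 <= X by rewrite /X !le_max lexx.
have XB : B <= X by rewrite /X !le_max lexx orbT.
have XK : (2 * k / A) `^ (e^-1) <= X by rewrite /X !le_max lexx orbT.
have X0 : 0 < X by apply: lt_le_trans X1.
set t := X `^ (- al).
have t0 : 0 < t by rewrite powR_gt0.
have t1 : t <= 1.
  rewrite /t powRN invf_le1 ?powR_gt0 //.
  by have := powR_mono al0 ler01 X1; rewrite powR1.
have tq : t ^+ q = (X ^+ n)^-1.
  rewrite /t -powR_mulrn ?powR_ge0 // -powRrM mulNr divfK ?pnatr_eq0 -?lt0n //.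
  by rewrite powR_invn // ltW.
have u1 : X ^+ n * t ^+ q = 1 by rewrite tq mulfV // expf_neq0 // gt_eqF.
pose p : 'I_3 -> C := fun i => if val i == 0%N then rc X else if val i == 1%N then rc t else 0.
have pu : p O0 ^+ n * p O1 ^+ q = 1 by rewrite /= -!rcX -rcM u1.
have d0 : pderiv_at (f_nq R n q) O0 p = 0.
  rewrite pdX_u pu c_eq natrD; move: (2 * (3 * n + 1))%N => m; ring.
have d1 : pderiv_at (f_nq R n q) O1 p = 0.
  rewrite pdY e_eq1 (e_eq2 _ hq) (exprD _ (2 * n + 1) n) (exprD _ (2 * q).-1 q).
  have -> : p O2 = 0 by [].
  move: pu; move: (p O0) (p O1) => a b pu.
  move: (a ^+ (2 * n + 1)) (b ^+ (2 * q).-1) => g1 g2.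
  move: (a ^+ n) (b ^+ q) pu => an bq pu.
  transitivity ((6 * q)%:R * (g1 * g2) * (an * bq - 1)).
    rewrite !natrM; ring.
  by rewrite pu subrr mulr0.
have d2 : pderiv_at (f_nq R n q) O2 p = rc t by rewrite pdZ.
have gn : vnorm (grad (f_nq R n q) p) = t.
  rewrite /vnorm sum3 /grad d0 d1 d2 /cconj /=.
  rewrite oppr0 expr0n /= !addr0 add0r sqrtr_sqr gtr0_norm //.
have pn : vnorm p = Num.sqrt (X ^+ 2 + t ^+ 2).
  by rewrite /vnorm sum3 /= expr0n /= !addr0.
set r := vnorm p.
have rX : X <= r.
  rewrite /r pn -[X in X <= _]gtr0_norm // -sqrtr_sqr; apply: ler_wsqrtr.
  by rewrite lerDl sqr_ge0.
have r2X : r <= 2 * X.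
  rewrite /r pn -[X in _ <= X]gtr0_norm ?mulr_gt0 // -sqrtr_sqr; apply: ler_wsqrtr.
  have : t ^+ 2 <= X ^+ 2 by apply: lerXn2r; rewrite ?nnegrE ?(ltW t0) ?(ltW X0) //; apply: le_trans X1.
  nra.
have r0 : 0 < r by apply: lt_le_trans rX.
have Hp := H p (le_trans XB rX).
rewrite gn in Hp.
have h1 : t <= r `^ (- al) * k.
  rewrite /t /k -powRM ?(ltW r0) //.
  apply: powR_anti => //; first by rewrite mulr_gt0.
  lra.
have h2 : r `^ nu = r `^ (- al) * r `^ e.
  rewrite -powRD; first by congr (_ `^ _); rewrite /e; ring.
  by apply/implyP => _; rewrite gt_eqF.
have h3 : A * r `^ e <= k.
  have : r `^ (- al) * (A * r `^ e) <= r `^ (- al) * k.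
    by rewrite mulrCA -h2; apply: le_trans Hp h1.
  by rewrite ler_pM2l ?powR_gt0.
have h4 : X `^ e <= r `^ e by apply: powR_mono; [exact: ltW e0 | exact: ltW X0 | exact: rX].
have h5 : 2 * k / A <= X `^ e.
  have := powR_mono (ltW e0) (powR_ge0 _ _) XK.
  rewrite -powRrM mulVf ?gt_eqF // powRr1 //.
  by rewrite divr_ge0 ?mulr_ge0 ?ltW.
have : A * (2 * k / A) <= k.
  apply: le_trans h3; rewrite ler_pM2l //; exact: le_trans h5 h4.
rewrite mulrCA mulfV ?gt_eqF // mulr1; lra.
Qed.

Lemma pos_eq n : (0 < 2 * (12 * n + 5))%N.
Proof. lia. Qed.

End A.

Theorem proposition1p4 (R : realType) (n q : nat) :
  (0 < n)%N -> (0 < q)%N ->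
  L_infty (f_nq R n q) = ((- (n%:R / q%:R : R))%:E)%E.
Proof.
move=> hn hq.
rewrite /L_infty asboolT; last first.
  move=> x hx; exfalso.
  have z := hx (Ordinal (isT : (2 < 3)%N)); rewrite pdZ in z.
  have o := hx (Ordinal (isT : (0 < 3)%N)); rewrite pdX_u z expr0n gtn_eqF // mulr0 !expr0n /= !mulr0 subr0 addr0 in o.
  by have := @oner_neq0 (Cx R); rewrite o eqxx.
apply/le_anti/andP; split.
  apply: ge_ereal_sup => _ [nu hnu <-]; rewrite lee_fin; exact: upper hnu.
apply: ereal_sup_ubound; exists (- (n%:R / q%:R)) => //.
exists (2 * (12 * n + 5))%:R^-1, 1; split; first by rewrite invr_gt0 ltr0n pos_eq.
split=> // x; exact: lower.
Qed.
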